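(* Run the Unbiased Space Saving sketch with $m$ bins on an i.i.d. stream of items drawn from a discrete distribution with probabilities $p_1 \ge p_2 \ge \cdots$. Let $\alpha = \sum_{j > m} p_j$. For any $\alpha' < \alpha$, with probability $1$, $\hat{N}_{min}(t) > \alpha' t / m$ for all sufficiently large $t$.
   Context: Unbiased Space Saving sketch with $m$ bins: maintain $m$ (item, count) pairs, counts initialized to $0$. For each new row with item $x_{new}$: if $x_{new}$ is a label, increment its count by $1$; otherwise choose a pair with the smallest count $\hat{N}_{min}$ (uniformly at random among all pairs sharing the smallest count), increment its count by $1$, and with probability $1/(\hat{N}_{min}+1)$ replace its label by $x_{new}$. $\hat{N}_{min}(t)$ is the smallest count among the $m$ pairs after $t$ rows have been processed. *)

(* Defs.v *)
From HB Require Import structures.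
From mathcomp Require Import all_boot all_order all_algebra.
From mathcomp Require Import all_classical all_reals all_analysis.
Set Implicit Arguments. Unset Strict Implicit. Unset Printing Implicit Defensive.
Import Order.TTheory GRing.Theory Num.Theory.
Local Open Scope classical_set_scope.
Local Open Scope ring_scope.

(* Items are natural numbers.  A sketch with m bins is a sequence of   *)
(* m pairs (label, count); a label is [Some x] for an item x, or [None] *)
(* for an (initially) unlabeled bin.                                   *)
(* The random choices of the algorithm are realized from two auxiliary *)
(* real numbers u v in [0,1): among the k bins with the smallest count *)
(* (listed in increasing position), the one of rank floor(u*k) is      *)
(* chosen (uniform among ties when u is uniform on [0,1)), and its     *)
(* label is replaced iff v < 1/(Nmin+1) (probability 1/(Nmin+1) when v  *)
(* is uniform on [0,1)).                                               *)

Definition uss_state := seq (option nat * nat).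

Definition uss_init (m : nat) : uss_state := nseq m (None, 0%N).

Definition uss_nmin (s : uss_state) : nat :=
  foldr minn (head 0%N (map snd s)) (map snd s).

Definition uss_step (R : realType) (s : uss_state) (x : nat) (u v : R)
  : uss_state :=
  let d := (None, 0%N) in
  if Some x \in map fst s then
    let i := index (Some x) (map fst s) in
    set_nth d s i ((nth d s i).1, (nth d s i).2.+1)
  else
    let nm := uss_nmin s in
    let tied := [seq i <- iota 0 (size s) | (nth d s i).2 == nm] in
    let i := nth 0%N tied (Num.truncn (u * (size tied)%:R)) in
    let lab := if v < (nm.+1%:R)^-1 then Some x else (nth d s i).1 in
    set_nth d s i (lab, nm.+1).

Fixpoint uss_run (R : realType) (m : nat) (x : nat -> nat) (u v : nat -> R)
  (t : nat) : uss_state :=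
  match t with
  | 0 => uss_init m
  | t'.+1 => uss_step (uss_run m x u v t') (x t') (u t') (v t')
  end.

Definition Nmin (R : realType) (m : nat) (x : nat -> nat) (u v : nat -> R)
  (t : nat) : nat := uss_nmin (uss_run m x u v t).

Definition mutually_independent (d : measure_display) (T : measurableType d)
  (R : realType) (P : probability T R)
  (X : nat -> T -> nat) (U V : nat -> T -> R) : Prop :=
  forall (F : seq nat) (A : nat -> set nat) (B C : nat -> set R),
    uniq F ->
    (forall t, measurable (B t)) -> (forall t, measurable (C t)) ->
    P (\bigcap_(t in [set` F])
         (X t @^-1` A t `&` U t @^-1` B t `&` V t @^-1` C t))
    = (\prod_(t <- F)
         (P (X t @^-1` A t) * P (U t @^-1` B t) * P (V t @^-1` C t)))%E.

Definition uniform01 (d : measure_display) (T : measurableType d)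
  (R : realType) (P : probability T R) (W : T -> R) : Prop :=
  measurable_fun setT W /\
  forall B : set R, measurable B ->
    P (W @^-1` B) = (@lebesgue_measure R) (B `&` `[0%R, 1%R])%classic.

(* Main.v *)
Require Import Defs.
From HB Require Import structures.
From mathcomp Require Import all_boot all_order all_algebra.
From mathcomp Require Import all_classical all_reals all_analysis.
From mathcomp Require Import zify ring lra.
Import Order.TTheory GRing.Theory Num.Theory.
Local Open Scope classical_set_scope.
Local Open Scope ring_scope.
Section Det.

Lemma map_set_nth' (A B : Type) (f : A -> B) (d : A) (s : seq A) i y :
  (i < size s)%N -> map f (set_nth d s i y) = set_nth (f d) (map f s) i (f y).
Proof.
elim: s i => [|a s IH] [|i] //= Hi; by rewrite IH.
Qed.

Lemma all_set_nth' (A : Type) (P : pred A) (d : A) (s : seq A) i y :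
  (i < size s)%N -> all P s -> P y -> all P (set_nth d s i y).
Proof.
elim: s i => [|a s IH] [|i] //= Hi /andP[Pa Ps] Py; first by rewrite Py.
by rewrite Pa IH.
Qed.

Lemma set_nth_same (A : Type) (d : A) (s : seq A) i :
  (i < size s)%N -> set_nth d s i (nth d s i) = s.
Proof. by elim: s i => [|a s IH] [|i] //= Hi; rewrite IH. Qed.

Lemma foldr_minn_le (L : seq nat) h y : y \in L -> (foldr minn h L <= y)%N.
Proof.
elim: L => [|a L IH] //=; rewrite in_cons => /orP[/eqP ->|/IH H].
  exact: geq_minl.
by rewrite (leq_trans (geq_minr _ _) H).
Qed.

Lemma foldr_minn_mem (L : seq nat) h : foldr minn h L \in h :: L.
Proof.
elim: L => [|a L IH] /=; first by rewrite mem_seq1.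
rewrite /minn; case: ifP => _; first by rewrite !in_cons eqxx orbT.
move: IH; rewrite !in_cons => /orP[->//|->]; by rewrite !orbT.
Qed.

Lemma nmin_le (s : uss_state) y : y \in map snd s -> (uss_nmin s <= y)%N.
Proof. exact: foldr_minn_le. Qed.

Lemma nmin_mem (s : uss_state) : s != [::] -> uss_nmin s \in map snd s.
Proof.
case: s => [//|b s] _; rewrite /uss_nmin.
have := foldr_minn_mem (map snd (b :: s)) (head 0%N (map snd (b :: s))).
by rewrite in_cons /= => /orP[/eqP ->|]; rewrite ?in_cons ?eqxx.
Qed.

Lemma nmin_ge (s : uss_state) k : s != [::] -> all (fun b => k <= b.2)%N s ->
  (k <= uss_nmin s)%N.
Proof.
move=> /nmin_mem; move: (uss_nmin s) => y /mapP[b bs ->] /allP/(_ b bs)//.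
Qed.

Definition cnt (x : nat -> nat) (j t : nat) : nat :=
  count (pred1 j) (map x (iota 0 t)).

Definition hl (x : nat -> nat) t (l : option nat) : nat :=
  if l is Some j then cnt x j t else 0%N.

Lemma cntS x j t : cnt x j t.+1 = (cnt x j t + (x t == j))%N.
Proof. by rewrite /cnt -addn1 iotaD map_cat count_cat /= addn0. Qed.

Lemma hl_mono x t l : (hl x t l <= hl x t.+1 l)%N.
Proof. by case: l => //= j; rewrite cntS leq_addr. Qed.

Definition Inv (m : nat) (x : nat -> nat) (t : nat) (s : uss_state) :=
  [/\ size s = m, sumn (map snd s) = t,
      (forall a, count (pred1 (Some a)) (map fst s) <= 1)%N &
      all (fun b => b.2 <= (uss_nmin s).+1 + hl x t b.1)%N s].

Lemma uniq_set_nth_some (L : seq (option nat)) i a :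
  (i < size L)%N -> Some a \notin L ->
  (forall b, count (pred1 (Some b)) L <= 1)%N ->
  (forall b, count (pred1 (Some b)) (set_nth None L i (Some a)) <= 1)%N.
Proof.
move=> Hi aL H b; rewrite count_set_nth_ltn //=.
have [<-|ab] := eqVneq a b.
  have -> : count (pred1 (Some a)) L = 0%N.
    by apply/eqP; rewrite -leqn0 leqNgt -has_count; apply/hasP => -[y yL /= /eqP Ey];
       move: aL; rewrite -Ey yL.
  by rewrite eqxx add0n (leq_trans (leq_subr _ _)).
have -> : (Some a == Some b) = false by apply/eqP => -[]; apply/eqP.
by rewrite addn0 (leq_trans (leq_subr _ _)) ?H.
Qed.

Lemma sum_hl x t (L : seq (option nat)) :
  (forall b, count (pred1 (Some b)) L <= 1)%N ->
  (\sum_(l <- L) hl x t l = count (fun y => Some y \in L) (map x (iota 0 t)))%N.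
Proof.
elim: L => [|l L IH] H; first by rewrite big_nil count_pred0.
have H' b : (count (pred1 (Some b)) L <= 1)%N.
  by apply: leq_trans (H b); rewrite /= leq_addl.
rewrite big_cons IH //; case: l H => [j|] H /=; last first.
  by apply: eq_count => y; rewrite in_cons.
have jL : Some j \notin L.
  have := H j; rewrite /= eqxx add1n ltnS leqn0 => /eqP C.
  apply/negP => jL; have : (0 < count (pred1 (Some j)) L)%N.
    by rewrite -has_count; apply/hasP; exists (Some j) => //=.
  by move: C; case: (count _ _).
rewrite /cnt; have := count_predUI (pred1 j) (fun y => Some y \in L) (map x (iota 0 t)).
rewrite (@eq_count _ (predI _ _) pred0); last first.
  by move=> y /=; apply/negP => /andP[/eqP -> ]; apply/negP.
rewrite count_pred0 addn0 => <-; apply: eq_count => y /=.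
by rewrite in_cons.
Qed.

End Det.
Section Step.
Lemma Inv_step (R : realType) m x t s (u v : R) :
  (0 < m)%N -> u < 1 -> Inv m x t s -> Inv m x t.+1 (uss_step s (x t) u v).
Proof.
move=> m0 u1 [Hsz Hsum Huq Hall].
have sne : s != [::] by rewrite -size_eq0 Hsz -lt0n.
have Nle : forall b, b \in s -> (uss_nmin s <= b.2)%N.
  by move=> b bs; apply: nmin_le; apply/mapP; exists b.
rewrite /uss_step; case: ifP => Hin.
- set i := index _ _.
  have Hi : (i < size s)%N by rewrite -(size_map fst) index_mem.
  have Hl : (nth (None, 0%N) s i).1 = Some (x t).
    by rewrite -(nth_map _ None) // nth_index.
  set c := (nth (None, 0%N) s i).2.
  set s' := set_nth _ _ _ _.
  have Hsz' : size s' = m by by rewrite size_set_nth (maxn_idPr Hi).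
  have Hfst : map fst s' = map fst s.
    by rewrite map_set_nth' //= -(nth_map _ None) // set_nth_same ?size_map.
  have Hsnd : map snd s' = set_nth 0%N (map snd s) i c.+1 by rewrite map_set_nth'.
  have cin : (nth (None, 0%N) s i) \in s by rewrite mem_nth.
  have HN : (uss_nmin s <= uss_nmin s')%N.
    apply: nmin_ge; first by rewrite -size_eq0 Hsz' -lt0n.
    apply: all_set_nth' => //; first by apply/allP => b /Nle.
    by rewrite /= ltnW // ltnS Nle.
  split => //.
  + rewrite Hsnd sumn_set_nth_ltn ?size_map // Hsum (nth_map (None, 0%N)) //.
    by rewrite -/c addnS subSn ?leq_addl // addnK.
  + by rewrite Hfst.
  + apply: all_set_nth' => //=.
      apply/allP => b bs; have := allP Hall b bs => /= H.
      apply: (leq_trans H); rewrite leq_add ?ltnS ?hl_mono //.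
    rewrite Hl /= cntS eqxx addn1 addnS ltnS.
    have := allP Hall _ cin; rewrite Hl /= => H.
    by apply: (leq_trans H); rewrite leq_add2r ltnS.
- set nm := uss_nmin s.
  set tied := [seq _ <- _ | _].
  have Htied : (0 < size tied)%N.
    rewrite size_filter -has_count; apply/hasP.
    have nmin := @nmin_mem s sne.
    exists (index nm (map snd s)).
      by rewrite mem_iota add0n -(size_map snd) index_mem.
    rewrite -(nth_map _ 0%N); last by rewrite -(size_map snd) index_mem.
    by rewrite nth_index.
  set k := Num.truncn _.
  have Hk : (k < size tied)%N.
    move: Htied; case E: (size tied) => [//|n] _.
    rewrite ltnS /k truncn_le_nat -E.
    have : (0 : R) < (size tied)%:R by rewrite ltr0n E.
    move=> H; rewrite -[X in _ < X]mul1r ltr_pM2r //.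
  set i := nth 0%N tied k.
  have : i \in tied by rewrite mem_nth.
  rewrite mem_filter mem_iota add0n => /andP[/eqP Hc /= Hi].
  set lab := if _ then _ else _.
  set s' := set_nth _ _ _ _.
  have Hsz' : size s' = m by by rewrite size_set_nth (maxn_idPr Hi).
  have Hsnd : map snd s' = set_nth 0%N (map snd s) i nm.+1 by rewrite map_set_nth'.
  have cin : (nth (None, 0%N) s i) \in s by rewrite mem_nth.
  have HN : (nm <= uss_nmin s')%N.
    apply: nmin_ge; first by rewrite -size_eq0 Hsz' -lt0n.
    apply: all_set_nth' => //; by apply/allP => b /Nle.
  split => //.
  + rewrite Hsnd sumn_set_nth_ltn ?size_map // Hsum (nth_map (None, 0%N)) //.
    by rewrite Hc addnS subSn ?leq_addl // addnK.
  + rewrite map_set_nth' //= /lab; case: ifP => _.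
      apply: uniq_set_nth_some => //; first by rewrite size_map.
      by rewrite Hin.
    by rewrite -(nth_map _ None) // set_nth_same ?size_map.
  + apply: all_set_nth' => //=.
      apply/allP => b bs; have := allP Hall b bs => /= H.
      apply: (leq_trans H); rewrite leq_add ?ltnS ?hl_mono //.
    by rewrite ltnS (leq_trans HN) // leq_addr.
Qed.
End Step.
Section Run.
Lemma Inv_run (R : realType) m x (u v : nat -> R) t :
  (0 < m)%N -> (forall s, (s < t)%N -> u s < 1) -> Inv m x t (uss_run m x u v t).
Proof.
move=> m0; elim: t => [|t IH] Hu /=.
  split; rewrite ?size_nseq //.
  - by elim: m {m0} => //.
  - by move=> a; elim: m {m0} => //.
  - by apply/allP => b /nseqP [-> _].
apply: Inv_step => //; first exact: Hu.
by apply: IH => s st; apply: Hu; apply: ltnW.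
Qed.

Lemma det_bound m x t s : Inv m x t s ->
  (count (fun y => Some y \notin map fst s) (map x (iota 0 t)) <= m * (uss_nmin s).+1)%N.
Proof.
case=> Hsz Hsum Huq Hall.
have H1 : (t <= m * (uss_nmin s).+1 + count (fun y => Some y \in map fst s) (map x (iota 0 t)))%N.
  rewrite -sum_hl // big_map -[X in (X <= _)%N]Hsum sumnE big_map.
  have -> : (m * (uss_nmin s).+1 = \sum_(b <- s) (uss_nmin s).+1)%N.
    by rewrite big_const_seq count_predT Hsz iter_addn_0 mulnC.
  rewrite -big_split /=; rewrite big_seq [X in (_ <= X)%N]big_seq; apply: leq_sum => b bs; exact: (allP Hall b bs).
have := count_predC (fun y => Some y \in map fst s) (map x (iota 0 t)).
rewrite size_map size_iota.
have -> : count (predC (fun y => Some y \in map fst s)) (map x (iota 0 t)) =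
          count (fun y => Some y \notin map fst s) (map x (iota 0 t)) by [].
lia.
Qed.
End Run.
Section Comb.
Lemma count_split_sum (a : pred nat) (xs : seq nat) M :
  (\sum_(0 <= j < M | a j) count (pred1 j) xs)%N = count (fun y => a y && (y < M)%N) xs.
Proof.
elim: M => [|M IH].
  by rewrite big_geq // (@eq_count _ _ pred0) ?count_pred0 // => y; rewrite andbF.
rewrite big_mkcond big_nat_recr //= -big_mkcond IH.
have := count_predUI (fun y => a y && (y < M)%N) (fun y => a y && (y == M)) xs.
rewrite (@eq_count _ (predI _ _) pred0); last first.
  by move=> y /=; apply/negP => /andP[/andP[_ H1] /andP[_ /eqP E]]; move: H1; rewrite E ltnn.
rewrite count_pred0 addn0 => E.
rewrite (@eq_count _ (fun y => a y && (y < M.+1)%N) (predU (fun y => a y && (y < M)%N) (fun y => a y && (y == M)))); last first.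
  by move=> y /=; rewrite ltnS leq_eqVlt -andb_orr orbC.
rewrite E; congr (_ + _)%N; case: ifP => aM.
  by apply: eq_count => y /=; case: eqP => [->|]; rewrite ?aM ?andbF.
by rewrite (@eq_count _ _ pred0) ?count_pred0 // => y /=; case: eqP => [->|]; rewrite ?aM ?andbF.
Qed.

Lemma count_notin_ge (a : pred nat) (xs : seq nat) M :
  (\sum_(0 <= j < M | a j) count (pred1 j) xs <= count a xs)%N.
Proof.
rewrite count_split_sum; apply: sub_count => y /= /andP[] //.
Qed.

Lemma count_iota_le (L : seq (option nat)) M :
  (count (fun j => Some j \in L) (iota 0 M) <= size L)%N.
Proof.
rewrite -size_filter -(size_map Some); apply: uniq_leq_size.
  rewrite map_inj_uniq ?filter_uniq ?iota_uniq //; by move=> ? ? [].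
by move=> y /mapP [j]; rewrite mem_filter => /andP[H _] ->.
Qed.

Variable R : realType.

Lemma shift_le (p : nat -> R) k M : (forall j, p j.+1 <= p j) ->
  \sum_(k.+1 <= j < M.+1) p j <= \sum_(k <= j < M) p j.
Proof.
move=> pd; rewrite big_add1 /=; rewrite [leRHS]big_nat_cond [leLHS]big_nat_cond.
by apply: ler_sum => j _; apply: pd.
Qed.

Lemma beta_le (p : nat -> R) (a : pred nat) M : (forall j, 0 <= p j) ->
  (forall j, p j.+1 <= p j) ->
  \sum_(count a (iota 0 M) <= j < M) p j <= \sum_(0 <= j < M) (if a j then 0 else p j).
Proof.
move=> p0 pd; elim: M => [|M IH]; first by rewrite !big_geq.
have cM : (count a (iota 0 M) <= M)%N by rewrite (leq_trans (count_size _ _)) ?size_iota.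
rewrite -addn1 iotaD count_cat /= add0n addn0 addn1.
rewrite [leRHS]big_nat_recr //=.
case aM: (a M) => /=.
  rewrite addn1; have := shift_le p (count a (iota 0 M)) M pd.
  move: IH; set A := \sum_(_ <= _ < _) _; set B := \sum_(_ <= _ < _) _; set C := \sum_(_ <= _ < _) _.
  clearbody A B C; lra.
rewrite addn0 big_nat_recr /=; last exact: cM.
move: IH; set A := \sum_(_ <= _ < _) _; set B := \sum_(_ <= _ < _) _. clearbody A B. lra.
Qed.

Lemma beta_le2 (p : nat -> R) k m M : (forall j, 0 <= p j) -> (k <= m)%N ->
  \sum_(m <= j < M) p j <= \sum_(k <= j < M) p j.
Proof.
move=> p0 km; case: (leqP m M) => mM.
  rewrite (@big_cat_nat _ _ _ m k M _ _ km mM) /=.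
  have : 0 <= \sum_(k <= j < m) p j by apply: sumr_ge0.
  set A := \sum_(_ <= _ < _) _; set B := \sum_(_ <= _ < _) _; clearbody A B; lra.
rewrite (@big_geq _ _ _ m M); last exact: ltnW.
by apply: sumr_ge0.
Qed.
End Comb.
Section Real.
Variable R : realType.

Lemma bern_lo (eta : R) n : 0 <= eta -> eta <= 1 -> 1 - n%:R * eta <= (1 - eta) ^+ n.
Proof.
move=> e0 e1; elim: n => [|n IH]; first by rewrite mul0r subr0 expr0.
rewrite exprS.
have h : (1 - eta) * (1 - n%:R * eta) <= (1 - eta) * (1 - eta) ^+ n.
  by apply: ler_wpM2l => //; rewrite subr_ge0.
apply: le_trans h; rewrite -natr1.
have : 0 <= n%:R * eta * eta by rewrite !mulr_ge0.
set z := n%:R; move=> hz; nra.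
Qed.

Lemma bern_hi (eta : R) n : 0 <= eta -> eta <= 1 ->
  (1 - eta) ^+ n <= 1 - n%:R * eta + n%:R ^+ 2 * eta ^+ 2.
Proof.
move=> e0 e1; elim: n => [|n IH]; first by rewrite mul0r subr0 expr0 expr0n /= mul0r addr0.
rewrite exprS.
have h : (1 - eta) * (1 - eta) ^+ n <= (1 - eta) * (1 - n%:R * eta + n%:R ^+ 2 * eta ^+ 2).
  by apply: ler_wpM2l => //; rewrite subr_ge0.
apply: le_trans h _; rewrite -natr1.
have n0 : 0 <= (n%:R : R) by [].
set z := (n%:R : R).
have : 0 <= z ^+ 2 * eta ^+ 3 by rewrite mulr_ge0 // exprn_ge0.
have : 0 <= z * eta ^+ 2 by rewrite mulr_ge0 // exprn_ge0.
have : 0 <= eta ^+ 2 by rewrite exprn_ge0.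
move=> h1 h2 h3; nra.
Qed.

Lemma choose_ab (pi q : R) : 0 <= q -> q < pi ->
  exists a b : nat, [/\ (0 < b)%N, q * b%:R <= a%:R & a%:R < pi * b%:R].
Proof.
move=> q0 qp; set dl := pi - q.
have dl0 : 0 < dl by rewrite subr_gt0.
set b := (Num.truncn (dl^-1)).+1.
have hb : dl^-1 < b%:R by apply: truncnS_gt.
have hb1 : 1 < dl * b%:R.
  have e : dl * dl^-1 = 1 by rewrite mulfV // lt0r_neq0.
  by rewrite -[X in X < _]e ltr_pM2l.
set a := (Num.truncn (q * b%:R)).+1.
have ha1 : q * b%:R < a%:R by apply: truncnS_gt.
have ha2 : a%:R <= q * b%:R + 1.
  rewrite /a -natr1 lerD2r truncn_le mulr_ge0 //.
exists a, b; split => //; first exact: ltW.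
apply: (le_lt_trans ha2); move: hb1; rewrite /dl; set B := b%:R; nra.
Qed.

Lemma choose_phi (pi : R) (a b : nat) : (0 < b)%N -> a%:R < pi * b%:R ->
  0 <= pi -> pi <= 1 ->
  exists phi : R, [/\ 0 < phi, phi <= 1 & 1 - pi + pi * phi ^+ b < phi ^+ a].
Proof.
move=> b0 ab p0 p1.
set A := (a%:R : R); set B := (b%:R : R).
have B1 : 1 <= B by rewrite /B ler1n.
have A0 : 0 <= A by [].
have pB : 0 < pi * B by apply: le_lt_trans ab.
have pi0 : 0 < pi by move: pB; rewrite pmulr_lgt0 // (lt_le_trans ltr01 B1).
set dl := pi * B - A.
have dl0 : 0 < dl by rewrite subr_gt0.
set eta := dl / (2 * pi * B ^+ 2).
have B0 : 0 < B by apply: lt_le_trans ltr01 B1.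
have B20 : 0 < B ^+ 2 by apply: exprn_gt0.
have den0 : 0 < 2 * pi * B ^+ 2 by rewrite !mulr_gt0.
have e0 : 0 < eta by rewrite divr_gt0.
have e3 : pi * B ^+ 2 * eta = dl / 2.
  by rewrite /eta; field; rewrite (lt0r_neq0 B0) (lt0r_neq0 pi0).
have e1' : eta < 1.
  have K0 : 0 < pi * B ^+ 2 by rewrite mulr_gt0.
  have h2 : pi * B <= pi * B ^+ 2 by rewrite expr2 mulrA ler_peMr // ltW.
  have h : dl <= pi * B by rewrite /dl lerBlDr lerDl.
  have : pi * B ^+ 2 * eta < pi * B ^+ 2 * 1.
    rewrite e3 mulr1; move: h h2 dl0; clearbody dl; move: (pi * B) (pi * B ^+ 2) => u v; lra.
  by rewrite ltr_pM2l.
have e1 := ltW e1'.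
exists (1 - eta); split; first by rewrite subr_gt0.
  by rewrite lerBlDr lerDl ltW.
have hlo := bern_lo eta a (ltW e0) e1.
have hhi := bern_hi eta b (ltW e0) e1.
have hhi' : pi * (1 - eta) ^+ b <= pi * (1 - B * eta + B ^+ 2 * eta ^+ 2).
  by apply: ler_wpM2l => //; apply: ltW.
apply: (lt_le_trans _ hlo); apply: (le_lt_trans (lerD (lexx _) hhi')).
have : 0 < dl * eta by rewrite mulr_gt0.
move: e3; rewrite /dl -/A -/B; move: (1 - eta) => z.
rewrite !expr2 => e3 h; nra.
Qed.

Lemma geom_le (r : R) k : 0 <= r -> r < 1 -> \sum_(0 <= i < k) r ^+ i <= (1 - r)^-1.
Proof.
move=> r0 r1.
have E : \sum_(0 <= i < k) r ^+ i * (1 - r) = 1 - r ^+ k.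
  elim: k => [|k IH]; first by rewrite big_geq // expr0 subrr.
  rewrite big_nat_recr //= IH exprS; ring.
rewrite -[leRHS]div1r ler_pdivlMr ?subr_gt0 // mulr_suml E lerBlDr lerDl exprn_ge0 //.
Qed.

End Real.
Section Chern.
Variable R : realType.

Lemma prod_if_const (I : Type) (r : seq I) (P : pred I) (c : R) :
  \prod_(i <- r) (if P i then c else 1) = c ^+ (\sum_(i <- r) (P i : nat))%N.
Proof.
elim: r => [|i r IH]; first by rewrite !big_nil expr0.
rewrite !big_cons IH exprD; case: (P i) => /=; by rewrite ?expr1 ?expr0 ?mul1r.
Qed.

Lemma chernoff_sum (pi phi : R) (a b t : nat) : 0 <= pi -> pi <= 1 -> 0 < phi -> phi <= 1 ->
  \sum_(g : {ffun 'I_t -> bool} | (b * \sum_(i < t) (g i : nat) <= a * t)%N)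
     \prod_(i < t) (if g i then pi else 1 - pi)
  <= ((1 - pi + pi * phi ^+ b) / phi ^+ a) ^+ t.
Proof.
move=> p0 p1 f0 f1.
set W := fun g : {ffun 'I_t -> bool} => \prod_(i < t) (if g i then pi else 1 - pi).
have W0 : forall g, 0 <= W g.
  move=> g; apply: prodr_ge0 => i _; case: (g i); rewrite ?subr_ge0 //.
set S := fun g : {ffun 'I_t -> bool} => (\sum_(i < t) (g i : nat))%N.
have fat0 : 0 < phi ^+ (a * t) by apply: exprn_gt0.
apply: (@le_trans _ _ (\sum_(g : {ffun 'I_t -> bool} | (b * S g <= a * t)%N) W g * (phi ^+ (b * S g) / phi ^+ (a * t)))).
  apply: ler_sum => g Hg; apply: ler_peMr; first exact: W0.
  rewrite ler_pdivlMr // mul1r; exact: ler_wiXn2l (ltW f0) f1 _ _ Hg.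
apply: (@le_trans _ _ (\sum_(g : {ffun 'I_t -> bool}) W g * (phi ^+ (b * S g) / phi ^+ (a * t)))).
  rewrite [leRHS](bigID (fun g : {ffun 'I_t -> bool} => (b * S g <= a * t)%N)) /=.
  rewrite lerDl; apply: sumr_ge0 => g _; apply: mulr_ge0; first exact: W0.
  apply: divr_ge0; [exact: exprn_ge0 (ltW f0)| exact: ltW].
have E : forall g : {ffun 'I_t -> bool}, W g * phi ^+ (b * S g) =
   \prod_(i < t) (if g i then pi * phi ^+ b else 1 - pi).
  move=> g; rewrite exprM /S -prod_if_const /W -big_split /=.
  by apply: eq_bigr => i _; case: (g i); rewrite ?mulr1.
have -> : \sum_(g : {ffun 'I_t -> bool}) W g * (phi ^+ (b * S g) / phi ^+ (a * t)) =
          (\sum_(g : {ffun 'I_t -> bool}) \prod_(i < t) (if g i then pi * phi ^+ b else 1 - pi)) / phi ^+ (a * t).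
  rewrite mulr_suml; apply: eq_bigr => g _; by rewrite mulrA E.
rewrite -(bigA_distr_bigA (fun (i : 'I_t) (x : bool) => if x then pi * phi ^+ b else 1 - pi)) /=.
under eq_bigr do rewrite big_bool /=.
rewrite prodr_const card_ord exprM -exprVn -exprMn [pi * _ + _]addrC.
exact: lexx.
Qed.
End Chern.
Section Core.
Context (R : realType) (d : measure_display) (T : measurableType d)
  (P : probability T R).
Local Open Scope ereal_scope.

Definition fpat t (g : {ffun 'I_t -> bool}) (s : nat) : bool :=
  if (insub s : option 'I_t) is Some i then g i else false.
Arguments fpat {t}.

Lemma fpat_ord t g (i : 'I_t) : fpat g i = g i.
Proof. by rewrite /fpat valK. Qed.

Definition Epat (e : nat -> T -> bool) t (g : {ffun 'I_t -> bool}) : set T :=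
  \bigcap_(s in [set` iota 0 t]) [set w | e s w = fpat g s].

Lemma meas_eq (e : T -> bool) (bb : bool) : measurable [set w | e w] ->
  measurable [set w | e w = bb].
Proof.
move=> me; case: bb.
  by rewrite (_ : [set w | e w = true] = [set w | e w]) //; apply/seteqP; split => w.
rewrite (_ : [set w | e w = false] = ~` [set w | e w]); first exact: measurableC.
by apply/seteqP; split => w /=; [move=> -> | move/negP/negbTE].
Qed.

Lemma Epat_meas (e : nat -> T -> bool) t (g : {ffun 'I_t -> bool}) : (forall s, measurable [set w | e s w]) -> measurable (Epat e t g).
Proof.
move=> me; case: t g => [|t] g.
  by rewrite /Epat (_ : [set` iota 0 0] = set0) ?bigcap_set0 //; apply/seteqP; split.
apply: bigcap_measurable; first by exists 0%N.
by move=> s _; apply: meas_eq.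
Qed.

Lemma Epat_self (e : nat -> T -> bool) t w : Epat e t [ffun i : 'I_t => e i w] w.
Proof.
move=> s /=; rewrite mem_iota add0n /= => st.
by rewrite /fpat insubT /= ffunE.
Qed.

Lemma bigsetU_le (I : Type) (r : seq I) (Pr : pred I) (E : I -> set T) :
  (forall i, measurable (E i)) ->
  P (\big[setU/set0]_(i <- r | Pr i) E i) <= \sum_(i <- r | Pr i) P (E i).
Proof.
move=> mE; elim: r => [|i r IH]; first by rewrite !big_nil measure0.
rewrite !big_cons; case: ifP => // _.
apply: le_trans (measureU2 _ _ _) _ => //.
  by apply: bigsetU_measurable.
exact: leeD2l.
Qed.

Lemma in_bigsetU (I : eqType) (r : seq I) (Pr : pred I) (E : I -> set T) i0 w :
  i0 \in r -> Pr i0 -> E i0 w -> (\big[setU/set0]_(i <- r | Pr i) E i) w.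
Proof.
elim: r => [//|i r IH]; rewrite in_cons big_cons => /orP[/eqP <-|H] Pi Ew.
  by rewrite Pi; left.
by case: ifP => _; [right|]; apply: IH.
Qed.

Lemma count_sum_nat (p : pred nat) t :
  count p (iota 0 t) = (\sum_(i < t) (p i : nat))%N.
Proof.
rewrite -(big_mkord xpredT (fun i => (p i : nat))) /index_iota subn0.
elim: (iota 0 t) => [|x s IH]; by rewrite ?big_nil ?big_cons //= IH.
Qed.

Lemma core_neg (e : nat -> T -> bool) (pi q : R) :
  (forall s, measurable [set w | e s w]) ->
  (0 <= pi)%R -> (pi <= 1)%R -> (q < pi)%R ->
  (forall t (g : {ffun 'I_t -> bool}),
     P (Epat e t g) = (\prod_(i < t) (if g i then pi else 1 - pi))%:E) ->
  P.-negligible [set w | ~ exists T0 : nat, forall t, (T0 <= t)%N ->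
      (q * t%:R < (count (fun s => e s w) (iota 0 t))%:R)%R].
Proof.
move=> me p0 p1 qp HI.
case: (ltP q 0%R) => q0.
  apply: (negligibleS _ (negligible_set0 P)) => w /= Hw; apply: Hw.
  exists 1%N => t t1.
  have t0 : (0 < (t%:R : R))%R by rewrite ltr0n.
  apply: (@lt_le_trans _ _ 0%R); last by rewrite ler0n.
  by rewrite pmulr_llt0.
have [a [b [b0 hqb hab]]] := choose_ab _ _ _ q0 qp.
have [phi [f0 f1 hphi]] := choose_phi _ _ _ _ b0 hab p0 p1.
set rho := ((1 - pi + pi * phi ^+ b) / phi ^+ a)%R.
have fa0 : (0 < phi ^+ a)%R by apply: exprn_gt0.
have rho0 : (0 <= rho)%R.
  apply: divr_ge0; last exact: ltW.
  apply: addr_ge0; first by rewrite subr_ge0.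
  by apply: mulr_ge0 => //; apply: exprn_ge0; apply: ltW.
have rho1 : (rho < 1)%R by rewrite /rho ltr_pdivrMr // mul1r.
pose F := fun t => \big[setU/set0]_(g : {ffun 'I_t -> bool} | (b * \sum_(i < t) (g i : nat) <= a * t)%N) Epat e t g.
have mF : forall t, measurable (F t).
  by move=> t; apply: bigsetU_measurable => g _; apply: Epat_meas.
have PF : forall t, P (F t) <= (rho ^+ t)%:E.
  move=> t.
  have mE : forall g : {ffun 'I_t -> bool}, measurable (Epat e t g) by move=> g; apply: Epat_meas.
  apply: le_trans (bigsetU_le _ _ _ _ mE) _.
  under eq_bigr do rewrite HI.
  rewrite sumEFin lee_fin; exact: (chernoff_sum _ _ _ _ _ _ p0 p1 f0 f1).
exists (lim_sup_set F); split.
- apply: bigcap_measurable; first by exists 0%N.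
  by move=> k _; apply: bigcup_measurable => j _; apply: mF.
- apply: lim_sup_set_cvg0 => //.
  apply: (@le_lt_trans _ _ (\sum_(0 <= n <oo) (rho ^+ n)%:E)).
    by apply: lee_nneseries; [move=> n _ _; exact: measure_ge0 | move=> n _; exact: PF].
  apply: (@le_lt_trans _ _ ((1 - rho)^-1)%:E); last exact: ltry.
  apply: lime_le; first by apply: is_cvg_nneseries => n _ _; rewrite lee_fin exprn_ge0.
  apply: nearW => k; rewrite sumEFin lee_fin; exact: (geom_le _ _ _ rho0 rho1).
- move=> w /= Hw n _.
  apply: contrapT => H; apply: Hw; exists n => t nt.
  apply: contrapT => Hq; apply: H; exists t => //.
  apply: (in_bigsetU _ _ _ _ [ffun i : 'I_t => e i w] w); first exact: mem_index_enum.
    rewrite -(ler_nat R) natrM.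
    have -> : (\sum_(i < t) ([ffun i0 : 'I_t => e i0 w] i : nat))%N = count (fun s => e s w) (iota 0 t).
      by rewrite count_sum_nat; apply: eq_bigr => i _; rewrite ffunE.
    rewrite natrM; move/negP: Hq; rewrite -leNgt => Hq.
    apply: (@le_trans _ _ (b%:R * (q * t%:R))%R); first by apply: ler_wpM2l.
    rewrite mulrA [(b%:R * q)%R]mulrC; apply: ler_wpM2r => //.
  exact: Epat_self.
Qed.
End Core.
Arguments Epat {d T}.
Arguments fpat {t}.
Section Ind.
Context (R : realType) (d : measure_display) (T : measurableType d)
  (P : probability T R).

Lemma HI_of (X : nat -> T -> nat) (U V : nat -> T -> R) (p : nat -> R) j :
  (forall t j, measurable (X t @^-1` [set j])) ->
  (forall t j, P (X t @^-1` [set j]) = (p j)%:E) ->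
  mutually_independent P X U V ->
  forall t (g : {ffun 'I_t -> bool}),
    P (Epat (fun s w => X s w == j) t g) = (\prod_(i < t) (if g i then p j else 1 - p j))%:E.
Proof.
move=> Xm Xp HI t g.
pose A := fun s => if fpat g s then [set j] else ~` [set j].
have := HI (iota 0 t) A (fun _ => setT) (fun _ => setT) (iota_uniq 0 t)
  (fun _ => measurableT) (fun _ => measurableT).
have -> : \bigcap_(s in [set` iota 0 t]) (X s @^-1` A s `&` U s @^-1` setT `&` V s @^-1` setT)
   = Epat (fun s w => X s w == j) t g.
  apply: eq_bigcapr => s _; rewrite !preimage_setT !setIT /A.
  apply/seteqP; split => w /=; case: (fpat g s) => /=.
  - by move=> ->; rewrite eqxx.
  - by move=> H; apply/negbTE/eqP.
  - by move/eqP.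
  - by move/negbT/eqP.
move=> ->.
rewrite (eq_bigr (fun s => (if fpat g s then p j else 1 - p j)%:E)); last first.
  move=> s _; rewrite !preimage_setT probability_setT !mule1 /A.
  case: (fpat g s); first exact: Xp.
  by rewrite -preimage_setC probability_setC // Xp EFinB.
rewrite prodEFin; congr (_ %:E).
rewrite (eq_bigr (fun i : 'I_t => if fpat g i then p j else 1 - p j)); last first.
  by move=> i _; rewrite fpat_ord.
by rewrite -(big_mkord xpredT (fun s => if fpat g s then p j else 1 - p j)) /index_iota subn0.
Qed.
End Ind.
Section Fin.
Variable R : realType.

Lemma final_ineq (p : nat -> R) (c : nat -> nat) (a' : pred nat) (M m N t : nat) (eps beta : R) :
  (forall j, (j < M)%N -> (p j - eps) * t%:R < (c j)%:R) ->
  beta <= \sum_(0 <= j < M) (if a' j then 0 else p j) ->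
  (\sum_(0 <= j < M | ~~ a' j) c j <= m * N.+1)%N ->
  0 <= eps ->
  beta * t%:R - M%:R * eps * t%:R <= (m * N.+1)%:R.
Proof.
move=> Hc Hb Hs e0.
have t0 : 0 <= (t%:R : R) by [].
apply: (@le_trans _ _ (\sum_(0 <= j < M | ~~ a' j) (c j)%:R)); last first.
  by rewrite -natr_sum ler_nat.
rewrite big_mkcond /=.
apply: (@le_trans _ _ (\sum_(0 <= j < M) (if a' j then 0 else (p j - eps) * t%:R))); last first.
  apply: ler_sum_nat => j /andP[_ jM]; case: (a' j) => /=; first exact: lexx.
  exact: ltW (Hc j jM).
have -> : \sum_(0 <= j < M) (if a' j then 0 else (p j - eps) * t%:R) =
  (\sum_(0 <= j < M) (if a' j then 0 else p j)) * t%:R - \sum_(0 <= j < M) (if a' j then 0 else eps * t%:R).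
  rewrite mulr_suml -sumrB; apply: eq_bigr => j _; case: (a' j); rewrite ?mul0r ?subr0 //.
  by rewrite mulrBl.
have h1 : \sum_(0 <= j < M) (if a' j then 0 else eps * t%:R) <= M%:R * eps * t%:R.
  apply: (@le_trans _ _ (\sum_(0 <= j < M) eps * t%:R)).
    apply: ler_sum => j _; case: (a' j); last exact: lexx.
    by apply: mulr_ge0.
  by rewrite sumr_const_nat subn0 -(mulr_natl (eps * t%:R) M) mulrA.
have h2 : beta * t%:R <= (\sum_(0 <= j < M) (if a' j then 0 else p j)) * t%:R.
  by apply: ler_wpM2r.
move: h1 h2; set A := \sum_(_ <= _ < _) _; set B := \sum_(_ <= _ < _) _.
clearbody A B; move: (beta * t%:R) (M%:R * eps * t%:R) => u v; lra.
Qed.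

Lemma max_T (Q : nat -> nat -> Prop) M :
  (forall j, (j < M)%N -> exists T0, forall t, (T0 <= t)%N -> Q j t) ->
  exists T0, forall j t, (j < M)%N -> (T0 <= t)%N -> Q j t.
Proof.
elim: M => [|M IH] H; first by exists 0%N.
have [T1 H1] := IH (fun j jM => H j (ltnW jM)).
have [T2 H2] := H M (ltnSn M).
exists (maxn T1 T2) => j t; rewrite ltnS leq_eqVlt => /orP[/eqP ->|jM] Ht.
  by apply: H2; apply: leq_trans Ht; apply: leq_maxr.
by apply: H1 => //; apply: leq_trans Ht; apply: leq_maxl.
Qed.
End Fin.
Theorem lemma1 (R : realType) (d : measure_display) (T : measurableType d)
  (P : probability T R) (m : nat) (p : nat -> R)
  (X : nat -> T -> nat) (U V : nat -> T -> R) :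
  (0 < m)%N ->
  (forall j, 0 <= p j) ->
  (forall j, p j.+1 <= p j) ->
  (forall t j, measurable (X t @^-1` [set j])) ->
  (forall t j, P (X t @^-1` [set j]) = (p j)%:E) ->
  (forall t, uniform01 P (U t)) ->
  (forall t, uniform01 P (V t)) ->
  mutually_independent P X U V ->
  forall alpha' : R, (alpha'%:E < \sum_(m <= j <oo) (p j)%:E)%E ->
  {ae P, forall w, exists T0 : nat, forall t : nat, (T0 <= t)%N ->
     alpha' * t%:R / m%:R < (Nmin m (X ^~ w) (U ^~ w) (V ^~ w) t)%:R}.
Proof.
move=> m0 p0 pd Xm Xp Uu Vu HI alpha' Ha.
have p1 : forall j, p j <= 1.
  by move=> j; have := probability_le1 P (Xm 0%N j); rewrite Xp lee_fin.
have [M HM] : exists M, alpha' < \sum_(m <= j < M) p j.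
  apply: contrapT => H.
  have : (\sum_(m <= j <oo) (p j)%:E <= alpha'%:E)%E.
    apply: lime_le; first by apply: is_cvg_nneseries => n _ _; rewrite lee_fin.
    apply: nearW => k; rewrite sumEFin lee_fin leNgt; apply/negP => Hk; apply: H.
    by exists k.
  by rewrite leNgt Ha.
set beta := \sum_(m <= j < M) p j.
have bpos : 0 < beta - alpha' by rewrite subr_gt0.
set dl := (beta - alpha') / 2.
have dl0 : 0 < dl by rewrite divr_gt0.
set eps := (beta - alpha') / (2 * (M.+1)%:R).
have eps0 : 0 < eps by rewrite divr_gt0 // mulr_gt0.
have hMeps : M%:R * eps <= dl.
  have E : (M.+1)%:R * eps = dl.
    by rewrite /eps /dl; field; rewrite addrC natr1 pnatr_eq0.
  rewrite -E; apply: ler_wpM2r; [exact: ltW | by rewrite ler_nat].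
pose Nj := fun j => [set w | ~ exists T0 : nat, forall t, (T0 <= t)%N ->
      (p j - eps) * t%:R < (count (fun s => X s w == j) (iota 0 t))%:R].
have negj : forall j, P.-negligible (Nj j).
  move=> j.
  have me : forall s, measurable [set w | X s w == j].
    move=> s; rewrite (_ : [set w | X s w == j] = X s @^-1` [set j]); first exact: Xm.
    by apply/seteqP; split => w /=; [move/eqP | move=> ->].
  have qp : p j - eps < p j by rewrite ltrBlDr ltrDl.
  exact: (core_neg R d T P (fun s w => X s w == j) (p j) (p j - eps) me (p0 j) (p1 j) qp
            (HI_of R d T P X U V p j Xm Xp HI)).
pose NU := \bigcup_t (U t @^-1` `[1%R, +oo[%classic).
have negU : P.-negligible NU.
  apply: negligible_bigcup => t.
  case: (Uu t) => mUt PU.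
  have mU : measurable (U t @^-1` `[1%R, +oo[%classic).
    by rewrite -[X in measurable X]setTI; apply: mUt => //; apply: measurable_itv.
  apply/negligibleP => //.
  transitivity ((@lebesgue_measure R) (`[1%R, +oo[%classic `&` `[0%R, 1%R]%classic)).
    by apply: PU; apply: measurable_itv.
  rewrite (_ : _ `&` _ = [set 1%R]); first exact: lebesgue_measure_set1.
  apply/seteqP; split => x /=; rewrite !in_itv /= ?andbT.
    by move=> [h1 /andP[_ h2]]; apply/eqP; rewrite eq_le h1 h2.
  by move=> ->; rewrite lexx ler01.
pose Nall := NU `|` \big[setU/set0]_(j <- iota 0 M) Nj j.
have negall : P.-negligible Nall.
  apply: negligibleU => //; apply: negligible_bigsetU => k _; exact: negj.
apply: (negligibleS _ negall) => w /= nQ.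
apply: contrapT => nN; apply: nQ.
have hU : forall t, U t w < 1.
  move=> t; rewrite ltNge; apply/negP => H; apply: nN; left; exists t => //=.
  by rewrite in_itv /= andbT.
have hj : forall j, (j < M)%N -> exists T0, forall t, (T0 <= t)%N ->
    (p j - eps) * t%:R < (count (fun s => X s w == j) (iota 0 t))%:R.
  move=> j jM; apply: contrapT => H; apply: nN; right.
  apply: (in_bigsetU d T _ _ _ _ j w) => //; by rewrite mem_iota.
have [T1 HT1] := max_T _ _ hj.
set T2 := (Num.truncn (m%:R / dl)).+1.
have hT2 : forall t, (T2 <= t)%N -> m%:R < dl * t%:R.
  move=> t Ht; have h := truncnS_gt (m%:R / dl).
  have h2 : m%:R / dl < t%:R by apply: lt_le_trans h _; rewrite ler_nat.
  by rewrite mulrC -ltr_pdivrMr.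
exists (maxn T1 T2) => t Ht.
have Ht1 : (T1 <= t)%N by apply: leq_trans Ht; apply: leq_maxl.
have Ht2 : (T2 <= t)%N by apply: leq_trans Ht; apply: leq_maxr.
have Hinv := Inv_run R m (X ^~ w) (U ^~ w) (V ^~ w) t m0 (fun s _ => hU s).
have Hdet := det_bound _ _ _ _ Hinv.
rewrite /Nmin.
move: Hinv Hdet; set s := uss_run m (X ^~ w) (U ^~ w) (V ^~ w) t => Hinv Hdet.
set L := map fst s; set N := uss_nmin s.
have Hc := count_notin_ge (fun y => Some y \notin L) (map (X ^~ w) (iota 0 t)) M.
have Hs := leq_trans Hc Hdet.
have Hsz : size L = m by rewrite /L size_map; case: Hinv.
have Hb : beta <= \sum_(0 <= j < M) (if Some j \in L then 0 else p j).
  apply: le_trans (beta_le R p (fun j => Some j \in L) M p0 pd).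
  apply: beta_le2 => //; rewrite -Hsz; exact: count_iota_le.
have Hcj : forall j, (j < M)%N -> (p j - eps) * t%:R < (count (pred1 j) (map (X ^~ w) (iota 0 t)))%:R.
  by move=> j jM; rewrite count_map; apply: HT1.
have key := final_ineq R p (fun j => count (pred1 j) (map (X ^~ w) (iota 0 t)))
   (fun j => Some j \in L) M m N t eps beta Hcj Hb Hs (ltW eps0).
have m0' : 0 < (m%:R : R) by rewrite ltr0n.
rewrite ltr_pdivrMr //.
have h1 : M%:R * eps * t%:R <= dl * t%:R by apply: ler_wpM2r.
have h2 := hT2 t Ht2.
have hb : beta * t%:R = alpha' * t%:R + 2 * (dl * t%:R) by rewrite /dl; field.
move: key; rewrite natrM -natr1 hb.
move: h1 h2; set A := alpha' * t%:R; set D := dl * t%:R; set E := M%:R * eps * t%:R.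
clearbody A D E; move: (N%:R : R) (m%:R : R) m0' => n mm mpos; nra.
Qed.
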